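(* Let $\phi:\mathbb{R}_+\to\mathbb{R}_+$ be non-negative continuous, $d\nu=\phi(r)\,dr$, and let $I,J,K,L$ be non-negative functions on $\mathbb{R}_+$ such that $I(ab)\le bJ(a)+K(aL(b))$ for all $a,b\ge0$, $J$ is a lower isoperimetric function for $\nu$, $K$ is non-decreasing and concave, and $L$ is concave. Then for every elementary step function $f=b\mathbf{1}_{[r,s)}$ with $b\ge0$ and $0\le r<s$, $$I\Big(\int_{\mathbb{R}_+}f\,d\nu\Big)\le K\Big(\int_{\mathbb{R}_+}L(f)\,d\nu\Big)+V_\nu(f).$$
   Context: $\mathbb{R}_+=[0,\infty)$. For Borel $A\subset\mathbb{R}_+$, $\nu^+(A)=\liminf_{r\to0^+}\frac{\nu(A^r)-\nu(A)}{r}$ with $A^r=\{x\in\mathbb{R}_+:\operatorname{dist}(x,A)<r\}$; $J$ is a lower isoperimetric function for $\nu$ if $\nu^+(A)\ge J(\nu(A))$ for all Borel $A$. For a real function $f$ on $\mathbb{R}_+$ with bounded support, the weighted total variation is $V_\nu(f)=\sup\sum_{k=1}^{m}|f(\xi_k)-f(\xi_{k-1})|\,\phi(\xi_{k-1})$, the supremum over all $m\in\mathbb{N}$ and all finite increasing sequences $\xi_0<\xi_1<\dots<\xi_m$ of non-negative reals with $\operatorname{supp}f\subset[\xi_0,\xi_m]$. *)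

(* Defs.v *)
From HB Require Import structures.
From mathcomp Require Import all_boot all_order all_algebra.
From mathcomp Require Import all_classical all_reals all_analysis.
Set Implicit Arguments. Unset Strict Implicit. Unset Printing Implicit Defensive.
Import Order.TTheory GRing.Theory Num.Theory.
Import numFieldNormedType.Exports.
Local Open Scope classical_set_scope.
Local Open Scope ring_scope.

Section Defs.
Variable R : realType.

Definition Rplus : set R := `[0, +oo[%classic.

Definition nu (phi : R -> R) (A : set R) : \bar R :=
  (\int[@lebesgue_measure R]_(x in A) (phi x)%:E)%E.

Definition enlarge (A : set R) (r : R) : set R :=
  [set x | 0 <= x /\ exists2 a, A a & `|x - a| < r].

(* nu^+(A) = liminf_{r -> 0+} (nu(A^r) - nu(A)) / r, written out as
   sup_{d > 0} inf_{0 < r < d} *)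
Definition nu_plus (phi : R -> R) (A : set R) : \bar R :=
  ereal_sup [set ereal_inf [set ((nu phi (enlarge A r) - nu phi A)
                                  * (r^-1)%:E)%E | r in `]0, d[%classic]
            | d in `]0, +oo[%classic].

(* J is a lower isoperimetric function for nu: nu^+(A) >= J(nu(A)) for
   every Borel A of R_+ (of finite nu-measure, so that J(nu(A)) makes sense) *)
Definition lower_isoperimetric (phi J : R -> R) : Prop :=
  forall A : set R, measurable A -> A `<=` Rplus ->
    (nu phi A < +oo)%E -> ((J (fine (nu phi A)))%:E <= nu_plus phi A)%E.

Definition nondecreasing_on_Rplus (K : R -> R) : Prop :=
  forall x y, 0 <= x -> x <= y -> K x <= K y.

Definition concave_on_Rplus (K : R -> R) : Prop :=
  forall x y t, 0 <= x -> 0 <= y -> 0 <= t <= 1 ->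
    t * K x + (1 - t) * K y <= K (t * x + (1 - t) * y).

Definition supp (f : R -> R) : set R := closure [set x | f x != 0].

Definition admissible (f : R -> R) (m : nat) (xi : nat -> R) : Prop :=
  (0 < m)%N /\ 0 <= xi 0%N /\ (forall k, (k < m)%N -> xi k < xi k.+1) /\
  supp f `<=` `[xi 0%N, xi m]%classic.

Definition Vnu (phi f : R -> R) : \bar R :=
  ereal_sup [set v | exists m (xi : nat -> R), admissible f m xi /\
     v = (\sum_(1 <= k < m.+1) `|f (xi k) - f (xi k.-1)| * phi (xi k.-1))%:E].

Definition Kext (K : R -> R) (x : \bar R) : \bar R :=
  match x with
  | x%:E => (K x)%:E
  | +oo%E => ereal_sup [set (K y)%:E | y in Rplus]
  | -oo%E => (K 0)%:E
  end.

Definition step (b r s : R) (x : R) : R := if (r <= x) && (x < s) then b else 0.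

End Defs.
Arguments Rplus {R}.

(* Main.v *)
Require Import Defs.
From HB Require Import structures.
From mathcomp Require Import all_boot all_order all_algebra.
From mathcomp Require Import all_classical all_reals all_analysis.
From mathcomp Require Import measurable_realfun.
From mathcomp Require Import lra.
Import Order.TTheory GRing.Theory Num.Theory.
Import numFieldNormedType.Exports.
Local Open Scope classical_set_scope.
Local Open Scope ring_scope.

Section Helpers.
Variable R : realType.
Implicit Types (phi : R -> R).

Lemma cont_eps phi x : {within (@Rplus R), continuous phi} -> 0 <= x ->
  forall e, 0 < e -> exists2 d, 0 < d & forall y, 0 <= y -> `|x - y| < d -> `|phi x - phi y| < e.
Proof.
move=> /subspace_continuousP cf x0 e e0.
have := cf x; rewrite /Rplus /= in_itv /= andbT => /(_ x0) /cvgrPdist_lt /(_ e e0).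
rewrite near_withinE => /nbhs_ballP [d /= d0 hd]; exists d => // y y0 xy.
apply: hd; first by rewrite -ball_normE /=.
by rewrite /= in_itv /= andbT.
Qed.

Lemma mRplus : measurable (@Rplus R).
Proof. exact: measurable_itv. Qed.

Lemma mphi phi : {within (@Rplus R), continuous phi} -> measurable_fun Rplus phi.
Proof. by move=> cf; apply: subspace_continuous_measurable_fun => //; exact: mRplus. Qed.

Lemma mEphi phi (X : set R) : {within (@Rplus R), continuous phi} -> measurable X ->
  X `<=` Rplus -> measurable_fun X (fun x => (phi x)%:E).
Proof.
move=> cf mX XR; apply/measurable_EFinP.
exact: (measurable_funS mRplus XR (mphi phi cf)).
Qed.

Lemma step_in (b r s x : R) : r <= x -> x < s -> step b r s x = b.
Proof. by move=> rx xs; rewrite /step rx xs. Qed.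

Lemma step_out (b r s x : R) : ~ (r <= x < s) -> step b r s x = 0.
Proof. by rewrite /step; case: ifP. Qed.

Lemma stepE (b r s : R) : step b r s = fun x => b * \1_(`[r, s[%classic) x.
Proof.
apply/funext => x; rewrite /step indicE; case: ifP => h.
  by rewrite mem_set ?mulr1 //= in_itv /= h.
by rewrite memNset ?mulr0 //= in_itv /= h.
Qed.

Lemma supp_step (b r s : R) : r <= s -> supp (step b r s) `<=` `[r, s]%classic.
Proof.
move=> rs; rewrite /supp.
have -> : (`[r, s]%classic : set R) = closure `[r, s]%classic.
  by apply/closure_id; exact: interval_closed.
apply: closureS => x /=; rewrite /step in_itv /=.
by case/boolP: ((r <= x) && (x < s)) => [/andP[-> /ltW ->]|] //; rewrite eqxx.
Qed.

Lemma nu_ub phi (X : set R) (M c : R) : {within (@Rplus R), continuous phi} ->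
  measurable X -> X `<=` Rplus -> (forall x, X x -> phi x <= M) -> 0 <= M ->
  (lebesgue_measure X <= c%:E)%E -> (forall x, 0 <= x -> 0 <= phi x) ->
  (nu phi X <= (M * c)%:E)%E.
Proof.
move=> cf mX XR hM M0 lc phi0; rewrite /nu.
apply: (@le_trans _ _ (\int[lebesgue_measure]_(x in X) (cst M%:E) x)%E).
  have h0 : forall x, X x -> (0 <= (phi x)%:E)%E.
    by move=> x Xx; rewrite lee_fin phi0 //; have := XR _ Xx; rewrite /Rplus /= in_itv /= andbT.
  have h1 : forall x, X x -> ((phi x)%:E <= cst M%:E x)%E.
    by move=> x Xx; rewrite lee_fin hM.
  exact: (ge0_le_integral lebesgue_measure mX h0 (mEphi phi X cf mX XR) (measurable_cst _) h1).
rewrite integral_cst // EFinM; apply: lee_pmul => //.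
Qed.

End Helpers.

Section Main.
Variable R : realType.
Variable phi : R -> R.
Hypothesis phi0 : forall x, 0 <= x -> 0 <= phi x.
Hypothesis cf : {within (@Rplus R), continuous phi}.
Variables b r s : R.
Hypothesis b0 : 0 <= b.
Hypothesis r0 : 0 <= r.
Hypothesis rs : r < s.

Let A : set R := `[r, s[%classic.

Lemma inRplus (x : R) : Rplus x <-> 0 <= x.
Proof. by rewrite /Rplus /= in_itv /= andbT. Qed.

Lemma AR : A `<=` Rplus.
Proof. move=> x; rewrite /A /= in_itv /= => /andP[rx _]; apply/inRplus; exact: le_trans rx. Qed.

Lemma mA : measurable A.
Proof. exact: measurable_itv. Qed.

Lemma nu_ge0 {X : set R} : X `<=` Rplus -> (0 <= nu phi X)%E.
Proof. by move=> XR; apply: integral_ge0 => x /XR /inRplus x0; rewrite lee_fin phi0. Qed.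

Lemma nuA_fin : exists a, nu phi A = a%:E.
Proof.
have crs : {within `[r, s]%classic, continuous phi}.
  apply: continuous_subspaceW cf => x; rewrite /= in_itv /= => /andP[rx _].
  by apply/inRplus; exact: le_trans rx.
have [c cin cmax] := EVT_max (ltW rs) crs.
have c0 : 0 <= phi c.
  by apply: phi0; move: cin; rewrite in_itv /= => /andP[rc _]; exact: le_trans rc.
have hub := @nu_ub R phi A (phi c) (s - r) cf mA AR.
have : (nu phi A <= (phi c * (s - r))%:E)%E.
  apply: hub => //.
  - move=> x; rewrite /A /= !in_itv /= => /andP[rx xs]; apply: cmax.
    by rewrite in_itv /= rx ltW.
  - by rewrite lebesgue_measure_itv /= lte_fin rs -EFinD.
have := nu_ge0 AR.
case: (nu phi A) => [a| |] h1 h2; first by exists a.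
  by move: h2; rewrite leye_eq.
by move: h1; rewrite leeNy_eq.
Qed.

Lemma int_step a : nu phi A = a%:E ->
  (\int[lebesgue_measure]_(x in Rplus) (step b r s x * phi x)%:E = (b * a)%:E)%E.
Proof.
move=> hA.
transitivity (\int[lebesgue_measure]_(x in A) (b%:E * (phi x)%:E))%E.
  rewrite [LHS]integral_mkcond [RHS]integral_mkcond; apply: eq_integral => x _.
  rewrite /patch; case: (boolP (x \in A)) => xA.
    have xR : x \in Rplus by apply/mem_set/AR/set_mem.
    move: (xA) => /set_mem; rewrite /A /= in_itv /= => /andP[rx xs].
    by rewrite xR step_in // EFinM.
  case: (boolP (x \in Rplus)) => // _.
  rewrite step_out ?mul0r //.
  by move=> h; apply: (negP xA); apply: mem_set; rewrite /A /= in_itv /= h.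
have pA : forall x, A x -> (0 <= (phi x)%:E)%E.
  by move=> x /AR /inRplus x0; rewrite lee_fin phi0.
have := ge0_integralZl lebesgue_measure mA (mEphi _ phi A cf mA AR) pA (k:=b%:E).
by rewrite lee_fin => /(_ b0) /= ->; rewrite EFinM -hA.
Qed.

Lemma int_L (L : R -> R) a : (forall x, 0 <= x -> 0 <= L x) -> nu phi A = a%:E ->
  ((L b * a)%:E <= \int[lebesgue_measure]_(x in Rplus) (L (step b r s x) * phi x)%:E)%E.
Proof.
move=> L0 hA.
have mf : measurable_fun Rplus (fun x => (L (step b r s x) * phi x)%:E).
  apply/measurable_EFinP.
  have -> : (fun x => L (step b r s x) * phi x) =
            (fun x => L 0 + (L b - L 0) * \1_A x) \* phi.
    apply/funext => x /=; rewrite indicE /step; case: ifP => h.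
      by rewrite mem_set ?mulr1 ?(addrC (L 0)) ?subrK //= /A /= in_itv /= h.
    by rewrite memNset ?mulr0 ?addr0 //= /A /= in_itv /= h.
  apply: measurable_funM; last exact: mphi.
  apply: measurable_funD; first exact: measurable_cst.
  apply: measurable_funM; first exact: measurable_cst.
  exact: measurable_indic mA.
have f0 : forall x, Rplus x -> (0 <= (L (step b r s x) * phi x)%:E)%E.
  move=> x /inRplus x0; rewrite lee_fin mulr_ge0 ?phi0 //.
  by rewrite /step; case: ifP => _; apply: L0.
rewrite EFinM -hA.
have pA : forall x, A x -> (0 <= (phi x)%:E)%E.
  by move=> x /AR /inRplus x0; rewrite lee_fin phi0.
have := ge0_integralZl lebesgue_measure mA (mEphi _ phi A cf mA AR) pA (k:=(L b)%:E).
rewrite lee_fin => /(_ (L0 _ b0)) /= <-.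
apply: (@le_trans _ _ (\int[lebesgue_measure]_(x in A) (L (step b r s x) * phi x)%:E)%E); last first.
  exact: (ge0_subset_integral lebesgue_measure mA (mRplus R) mf f0 AR).
rewrite le_eqVlt; apply/orP; left; apply/eqP; apply: eq_integral => x /set_mem.
by rewrite /A /= in_itv /= => /andP[rx xs]; rewrite step_in // EFinM.
Qed.

Lemma mE h : measurable (enlarge A h).
Proof.
have -> : enlarge A h = Rplus `&` \bigcup_(a in A) ball a h.
  apply/seteqP; split => x /=.
  - move=> [x0 [a Aa xa]]; split; first exact/inRplus.
    by exists a => //; rewrite -ball_normE /= distrC.
  - move=> [/inRplus x0 [a Aa]]; rewrite -ball_normE /= => xa; split => //.
    by exists a => //; rewrite distrC.
apply: measurableI; first exact: mRplus.
by apply: open_measurable; apply: bigcup_open => a _; exact: ball_open.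
Qed.

Lemma nu_plus_le e : 0 < e ->
  (nu_plus phi A <= ((if 0 < r then phi r else 0) + phi s + e)%:E)%E.
Proof.
move=> e0.
set cr := if 0 < r then phi r else 0.
have cr0 : 0 <= cr by rewrite /cr; case: ifP => _ //; exact: phi0.
have e2 : 0 < e / 2 by rewrite divr_gt0.
have s0 : 0 <= s by rewrite (le_trans r0) // ltW.
have [ds ds0 hs] := cont_eps R phi s cf s0 _ e2.
have [dr dr0 hr] := cont_eps R phi r cf r0 _ e2.
have [a hA] := nuA_fin.
rewrite /nu_plus; apply: ge_ereal_sup => _ [d /= d0 <-].
move: d0; rewrite in_itv /= andbT => d0.
set m := Num.min d (Num.min ds dr).
have md : m <= d by rewrite ge_min lexx.
have mds : m <= ds by rewrite ge_min ge_min lexx orbT.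
have mdr : m <= dr by rewrite ge_min ge_min lexx !orbT.
have m0 : 0 < m by rewrite lt_min d0 lt_min ds0 dr0.
set h := m / 2.
have h0 : 0 < h by rewrite divr_gt0.
have hm : h < m by rewrite /h; lra.
apply: ge_ereal_inf; exists ((nu phi (enlarge A h) - nu phi A) * (h^-1)%:E)%E.
  by exists h => //=; rewrite in_itv /= h0 /=; lra.
rewrite lee_pdivrMr // hA leeBlDr //.
pose Lp : set R := Rplus `&` `](r - h), r[%classic.
pose Rt : set R := `[s, s + h[%classic.
have mLp : measurable Lp by apply: measurableI; [exact: mRplus|exact: measurable_itv].
have mRt : measurable Rt by exact: measurable_itv.
have LpR : Lp `<=` Rplus by move=> x [].
have RtR : Rt `<=` Rplus.
  by move=> x; rewrite /Rt /= in_itv /= => /andP[sx _]; apply/inRplus; exact: le_trans sx.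
have sub : enlarge A h `<=` Lp `|` A `|` Rt.
  move=> x [x0 [y Ay xy]]; move: Ay; rewrite /A /= in_itv /= => /andP[ry ys].
  move: xy; rewrite ltr_norml => /andP[h1 h2].
  case: (ltP x r) => xr.
    left; left; split; first exact/inRplus.
    by rewrite /= in_itv /= xr andbT; lra.
  case: (ltP x s) => xs.
    by left; right; rewrite /= in_itv /= xr xs.
  by right; rewrite /Rt /= in_itv /= xs /=; lra.
have mLpA : measurable (Lp `|` A) by apply: measurableU => //; exact: mA.
have mU : measurable (Lp `|` A `|` Rt) by exact: measurableU.
have UR : Lp `|` A `|` Rt `<=` Rplus by move=> x [[/LpR|/AR]|/RtR].
have LpAR : Lp `|` A `<=` Rplus by move=> x [/LpR|/AR].
have pos : forall X : set R, X `<=` Rplus -> forall x, X x -> (0 <= (phi x)%:E)%E.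
  by move=> X XR x /XR /inRplus x0; rewrite lee_fin phi0.
have U1 : (nu phi (enlarge A h) <= nu phi (Lp `|` A `|` Rt))%E.
  exact: (ge0_subset_integral lebesgue_measure (mE h) mU (mEphi _ phi _ cf mU UR) (pos _ UR) sub).
have eU1 : nu phi (Lp `|` A `|` Rt) = (nu phi (Lp `|` A) + nu phi Rt)%E.
  apply: (ge0_integral_setU lebesgue_measure mLpA mRt (mEphi _ phi _ cf mU UR) (pos _ UR)).
  apply/disj_setPS => x [[[_ xl]|xa] xt]; move: xt; rewrite /Rt /= in_itv /= => /andP[sx _].
  - move: xl; rewrite /= in_itv /= => /andP[_ xr].
    by have := lt_le_trans (lt_trans xr rs) sx; rewrite ltxx.
  - move: xa; rewrite /A /= in_itv /= => /andP[_ xs].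
    by have := lt_le_trans xs sx; rewrite ltxx.
have eU2 : nu phi (Lp `|` A) = (nu phi Lp + nu phi A)%E.
  apply: (ge0_integral_setU lebesgue_measure mLp mA (mEphi _ phi _ cf mLpA LpAR) (pos _ LpAR)).
  apply/disj_setPS => x [[_ xl] xa]; move: xl xa; rewrite /A /= !in_itv /=.
  by move=> /andP[_ xr] /andP[rx _]; have := lt_le_trans xr rx; rewrite ltxx.
have hLp : (nu phi Lp <= ((cr + e / 2) * h)%:E)%E.
  apply: nu_ub => //.
  - move=> x [/inRplus x0]; rewrite /= in_itv /= => /andP[hx xr].
    rewrite /cr; case: ifP => rpos; last first.
      by move: rpos; rewrite (le_lt_trans x0 xr).
    have hx' : `|r - x| < dr by rewrite ger0_norm; lra.
    by have := hr x x0 hx'; rewrite ltr_norml => /andP[hh _]; lra.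
  - lra.
  - apply: (@le_trans _ _ (lebesgue_measure (`](r - h), r[%classic : set R))).
      by apply: le_measure; rewrite ?inE; try (by move=> x []); try exact: measurable_itv; exact: mLp.
    rewrite lebesgue_measure_itv /= lte_fin ltrBlDr ltrDl h0 -EFinD lee_fin; lra.
have hRt : (nu phi Rt <= ((phi s + e / 2) * h)%:E)%E.
  apply: nu_ub => //.
  - move=> x; rewrite /Rt /= in_itv /= => /andP[sx xs].
    have x0 : 0 <= x by exact: le_trans sx.
    have hx' : `|s - x| < ds by rewrite ler0_norm; lra.
    by have := hs x x0 hx'; rewrite ltr_norml => /andP[hh _]; lra.
  - by have := phi0 _ s0; lra.
  - rewrite lebesgue_measure_itv /= lte_fin ltrDl h0 -EFinD lee_fin; lra.
apply: le_trans U1 _; rewrite eU1 eU2 hA.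
apply: le_trans (leeD (leeD hLp (lexx _)) hRt) _.
by rewrite -EFinM -!EFinD lee_fin; lra.
Qed.

Lemma Vnu_ge e : 0 < e ->
  ((b * ((if 0 < r then phi r else 0) + phi s - e))%:E <= Vnu phi (step b r s))%E.
Proof.
move=> e0.
have e2 : 0 < e / 2 by rewrite divr_gt0.
have s0 : 0 <= s by rewrite (le_trans r0) // ltW.
have [ds ds0 hs] := cont_eps R phi s cf s0 _ e2.
have [dr dr0 hr] := cont_eps R phi r cf r0 _ e2.
set m2 := Num.min ((s - r) / 2) (ds / 2).
have m2a : m2 <= (s - r) / 2 by rewrite ge_min lexx.
have m2b : m2 <= ds / 2 by rewrite ge_min lexx orbT.
have m20 : 0 < m2 by rewrite lt_min !divr_gt0 // subr_gt0.
set t := s - m2.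
have rt : r < t by rewrite /t; lra.
have ts : t < s by rewrite /t; lra.
have t0 : 0 <= t by apply: le_trans r0 (ltW rt).
have ht : phi s - e / 2 <= phi t.
  have hx' : `|s - t| < ds by rewrite ger0_norm /t; lra.
  by have := hs t t0 hx'; rewrite ltr_norml => /andP[_ hh]; lra.
have supp := supp_step R b r s (ltW rs).
have f2 : step b r s r = b := step_in R b r s r (lexx r) rs.
have f3 : step b r s t = b := step_in R b r s t (ltW rt) ts.
have f4 : step b r s s = 0.
  by apply: (step_out R b r s s) => /andP[_]; rewrite ltxx.
case: (ltP 0 r) => rpos.
  set h1 := Num.min r dr / 2.
  have h1a : h1 <= r / 2 by rewrite /h1 ler_pM2r // ge_min lexx.
  have h1b : h1 <= dr / 2 by rewrite /h1 ler_pM2r // ge_min lexx orbT.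
  have h10 : 0 < h1 by rewrite divr_gt0 // lt_min rpos dr0.
  have hr1 : phi r - e / 2 <= phi (r - h1).
    have hx' : `|r - (r - h1)| < dr by rewrite opprB addrC subrK ger0_norm; lra.
    have r1 : 0 <= r - h1 by lra.
    by have := hr _ r1 hx'; rewrite ltr_norml => /andP[_ hh]; lra.
  have f1 : step b r s (r - h1) = 0.
    by apply: (step_out R b r s (r - h1)) => /andP[hh _]; lra.
  pose xi := fun k : nat => match k with 0%N => r - h1 | 1%N => r | 2%N => t | _ => s end.
  apply: (@le_trans _ _ ((\sum_(1 <= k < 3.+1) `|step b r s (xi k) - step b r s (xi k.-1)| * phi (xi k.-1))%:E)); last first.
    apply: ereal_sup_ubound; exists 3%N, xi; split => //.
    split => //; split; first by rewrite /=; lra.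
    split; first by case=> [|[|[|]]] //= _; lra.
    apply: subset_trans supp _; apply: subset_itv; rewrite bnd_simp.
      by rewrite /=; lra.
    by rewrite /=.
  have -> : \sum_(1 <= k < 3.+1) `|step b r s (xi k) - step b r s (xi k.-1)| * phi (xi k.-1) =
    `|step b r s r - step b r s (r - h1)| * phi (r - h1) + (`|step b r s t - step b r s r| * phi r
     + (`|step b r s s - step b r s t| * phi t + 0)).
    by rewrite big_ltn // big_ltn // big_ltn // big_geq.
  rewrite f1 f2 f3 f4 lee_fin.
  rewrite subr0 subrr sub0r normrN normr0 ger0_norm //.
  have key : b * (phi r + phi s - e) <= b * (phi (r - h1) + phi t).
    by rewrite -subr_ge0 -mulrBr mulr_ge0 //; lra.
  lra.
pose xi := fun k : nat => match k with 0%N => r | 1%N => t | _ => s end.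
apply: (@le_trans _ _ ((\sum_(1 <= k < 2.+1) `|step b r s (xi k) - step b r s (xi k.-1)| * phi (xi k.-1))%:E)); last first.
  apply: ereal_sup_ubound; exists 2%N, xi; split => //.
  split => //; split => //.
  split; first by case=> [|[|]] //= _; lra.
  apply: subset_trans supp _; apply: subset_itv; rewrite bnd_simp.
    by rewrite /=.
  by rewrite /=.
have -> : \sum_(1 <= k < 2.+1) `|step b r s (xi k) - step b r s (xi k.-1)| * phi (xi k.-1) =
    `|step b r s t - step b r s r| * phi r + (`|step b r s s - step b r s t| * phi t + 0).
  by rewrite big_ltn // big_ltn // big_geq.
rewrite f2 f3 f4 lee_fin.
rewrite subrr sub0r normrN normr0 ger0_norm //.
have key : b * (0 + phi s - e) <= b * phi t.
  by rewrite -subr_ge0 -mulrBr mulr_ge0 //; lra.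
lra.
Qed.


Lemma main_sec (I J K L : R -> R) :
  (forall x, 0 <= x -> 0 <= L x) ->
  (forall a b, 0 <= a -> 0 <= b -> I (a * b) <= b * J a + K (a * L b)) ->
  lower_isoperimetric phi J ->
  nondecreasing_on_Rplus K ->
  ((I (fine (\int[@lebesgue_measure R]_(x in Rplus) (step b r s x * phi x)%:E)))%:E <=
     Kext K (\int[@lebesgue_measure R]_(x in Rplus) (L (step b r s x) * phi x)%:E)
     + Vnu phi (step b r s))%E.
Proof.
move=> L0 hIJK iso Kmon.
have [a hA] := nuA_fin.
have a0 : 0 <= a by rewrite -lee_fin -hA; exact: (nu_ge0 AR).
rewrite (int_step a hA) /= mulrC.
have hI := hIJK a b a0 b0.
have hK : ((K (a * L b))%:E <=
    Kext K (\int[@lebesgue_measure R]_(x in Rplus) (L (step b r s x) * phi x)%:E))%E.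
  have aL0 : 0 <= a * L b by rewrite mulr_ge0 // L0.
  move: (int_L L a L0 hA).
  case: (\int[@lebesgue_measure R]_(x in Rplus) (L (step b r s x) * phi x)%:E)%E => [y| |] hl.
  - rewrite /Kext lee_fin; apply: Kmon => //.
    by rewrite mulrC -lee_fin.
  - rewrite /Kext; apply: ereal_sup_ubound; exists (a * L b) => //.
    exact/inRplus.
  - by move: hl; rewrite leeNy_eq.
have Jle : J a <= (if 0 < r then phi r else 0) + phi s.
  apply/ler_addgt0Pr => e e0.
  have fin : (nu phi A < +oo)%E by rewrite hA ltry.
  have h1 := iso _ mA AR fin.
  have hf : fine (nu phi A) = a by rewrite hA.
  rewrite hf in h1.
  by have := le_trans h1 (nu_plus_le _ e0); rewrite lee_fin.
have hJ : ((b * J a)%:E <= Vnu phi (step b r s))%E.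
  have V1 := Vnu_ge _ ltr01.
  case EV: (Vnu phi (step b r s)) V1 => [v| |] V1.
  - rewrite lee_fin; apply/ler_addgt0Pr => e e0.
    have [bz|bpos] := eqVneq b 0.
      by move: V1; rewrite bz !mul0r lee_fin => v0; lra.
    have bp : 0 < b by rewrite lt_def bpos b0.
    have := Vnu_ge _ (divr_gt0 e0 bp); rewrite EV lee_fin.
    rewrite mulrBr mulrCA mulfV // mulr1 => hv.
    have : b * J a <= b * ((if 0 < r then phi r else 0) + phi s).
      by rewrite -subr_ge0 -mulrBr mulr_ge0 //; lra.
    lra.
  - by rewrite leey.
  - by move: V1; rewrite leeNy_eq.
apply: (@le_trans _ _ ((K (a * L b))%:E + (b * J a)%:E)%E).
  by rewrite -EFinD lee_fin addrC.
exact: leeD hK hJ.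
Qed.
End Main.

Theorem lemma2p4 (R : realType) (phi I J K L : R -> R) :
  (forall x, 0 <= x -> 0 <= phi x) ->
  {within Rplus, continuous phi} ->
  (forall x, 0 <= x -> 0 <= I x) ->
  (forall x, 0 <= x -> 0 <= J x) ->
  (forall x, 0 <= x -> 0 <= K x) ->
  (forall x, 0 <= x -> 0 <= L x) ->
  (forall a b, 0 <= a -> 0 <= b -> I (a * b) <= b * J a + K (a * L b)) ->
  lower_isoperimetric phi J ->
  nondecreasing_on_Rplus K -> concave_on_Rplus K ->
  concave_on_Rplus L ->
  forall b r s : R, 0 <= b -> 0 <= r -> r < s ->
  ((I (fine (\int[@lebesgue_measure R]_(x in Rplus) (step b r s x * phi x)%:E)))%:E <=
     Kext K (\int[@lebesgue_measure R]_(x in Rplus) (L (step b r s x) * phi x)%:E)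
     + Vnu phi (step b r s))%E.
Proof.
move=> phi0 cf I0 J0 K0 L0 hIJK iso Kmon Kc Lc b r s b0 r0 rs.
apply: main_sec; eassumption.
Qed.
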